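(* Let $(X,\triangleright)$ be a topological quandle and let $(C_*(X),\partial_* )$ be its singular quandle chain groups and boundary maps as described in the context. Then for every $n$ the composition $C_n(X)\xrightarrow{\partial_n} C_{n-1}(X)\xrightarrow{\partial_{n-1}} C_{n-2}(X)$ is zero.
   Context: A quandle is a set $X$ with a binary operation $\triangleright$ such that $x\triangleright x=x$ for all $x$, each map $\beta_y(x)=x\triangleright y$ is bijective, and $(x\triangleright y)\triangleright z=(x\triangleright z)\triangleright(y\triangleright z)$. A topological quandle is a topological space $X$ with a quandle operation $\triangleright:X\times X\to X$ that is continuous and such that every $\beta_y$ is a homeomorphism. Let $\Delta^n$ be the standard $n$-simplex with vertices $e_0,\dots,e_n$ (and let $\bar e_0,\dots,\bar e_{n-1}$ be the vertices of $\Delta^{n-1}$). A singular $n$-simplex is a continuous map $\sigma:\Delta^n\to X$; we write $\sigma=\sigma_{[x_1,\dots,x_{n+1}]}$ to indicate $x_i=\sigma(e_{i-1})$. Singular $n$-simplices form a quandle under the pointwise operation $(\sigma\triangleright\tau)(t)=\sigma(t)\triangleright\tau(t)$. $C_n(X)$ is the free abelian group on all singular $n$-simplices. For $2\le i\le n+1$, let $d_i\sigma$ be $\sigma$ composed with the affine map $\Delta^{n-1}\to\Delta^n$ sending $\bar e_j\mapsto e_j$ for $j\le i-2$ and $\bar e_j\mapsto e_{j+1}$ for $j\ge i-1$ (the face omitting the $i$-th vertex $x_i$), and let $s_i\sigma=\sigma\circ\iota_i$ where $\iota_i:\Delta^{n-1}\to\Delta^n$ is the affine map $\sum_{j=0}^{n-1}t_j\bar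 e_j\mapsto(\sum_{k=0}^{i-2}t_k)e_{i-1}+\sum_{j=i-1}^{n-1}t_je_{j+1}$ (so $s_i\sigma$ has vertices $x_i,\dots,x_i$ ($i-1$ times), $x_{i+1},\dots,x_{n+1}$). The boundary $\partial_n:C_n(X)\to C_{n-1}(X)$ is defined on generators by $\partial_n\sigma=\sum_{i=2}^{n+1}(-1)^i\big(d_i\sigma-d_i\sigma\triangleright s_i\sigma\big)$ and extended linearly; $\partial_0=0$. *)

(* Defs.v *)
From HB Require Import structures.
From mathcomp Require Import all_boot all_order all_algebra.
From mathcomp Require Import all_classical all_reals all_analysis.
From mathcomp Require Import Rstruct Rstruct_topology.
From mathcomp.multinomials Require Import freeg.
Set Implicit Arguments. Unset Strict Implicit. Unset Printing Implicit Defensive.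
Import Order.TTheory GRing.Theory Num.Theory.
Local Open Scope classical_set_scope.
Local Open Scope ring_scope.

Notation RR := Rdefinitions.R.

Definition topological_quandle (X : topologicalType) (op : X -> X -> X) : Prop :=
  [/\ (forall x, op x x = x),
      (forall y, bijective (fun x => op x y)),
      (forall x y z, op (op x y) z = op (op x z) (op y z)),
      continuous (fun p : X * X => op p.1 p.2) &
      (forall y, exists g : X -> X,
         [/\ cancel (fun x => op x y) g, cancel g (fun x => op x y),
             continuous (fun x => op x y) & continuous g])].

(* The standard n-simplex Delta^n in R^(n+1) (row vectors), vertices
   e_0, ..., e_n; as a topological space it carries the subspace topology
   (the initial topology of the inclusion, see subtype_topology.v). *)
Definition stdsimplex (n : nat) : set 'rV[RR]_n.+1 :=
  [set t | (forall i, 0 <= t 0 i) /\ \sum_i t 0 i = 1].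

Arguments stdsimplex n : clear implicits.
Notation Simplex n := (@set_type _ (stdsimplex n)).

(* The affine map Delta^m -> Delta^n sending the vertex e_j to e_(v j). *)
Definition affine_pt m n (v : 'I_m.+1 -> 'I_n.+1) (t : 'rV[RR]_m.+1)
  : 'rV[RR]_n.+1 := \row_k \sum_(j | v j == k) t 0 j.

Lemma affine_ptP m n (v : 'I_m.+1 -> 'I_n.+1) (t : Simplex m) :
  affine_pt v (val t) \in stdsimplex n.
Proof.
case: t => t /= /set_mem [t0 t1]; apply/mem_set; split.
  by move=> i; rewrite mxE; apply: sumr_ge0 => j _; exact: t0.
under eq_bigr do rewrite mxE.
by rewrite -t1 (partition_big v xpredT) //.
Qed.

Definition affine m n (v : 'I_m.+1 -> 'I_n.+1) : Simplex m -> Simplex n :=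
  fun t => exist _ (affine_pt v (val t)) (affine_ptP v t).

(* For 1 <= k <= n+1 (k = i-1, where i is the 1-based index of the vertex
   x_i = sigma(e_(i-1)) in the paper):
   face map: bar e_j |-> e_j (j < k), e_(j+1) (j >= k);
   degeneracy iota: bar e_j |-> e_k (j < k), e_(j+1) (j >= k). *)
Definition face_v n (k : 'I_n.+2) : 'I_n.+1 -> 'I_n.+2 := fintype.lift k.
Definition degen_v n (k : 'I_n.+2) : 'I_n.+1 -> 'I_n.+2 :=
  fun j => if (j < k)%N then k else fintype.lift k j.

(* Chains are elements
   of the free abelian group on maps Delta^n -> X whose support consists of
   continuous maps (this subgroup is the free abelian group C_n(X)). *)
Definition chains (X : topologicalType) (n : nat) := {freeg (Simplex n -> X) / int}.

Definition is_singular_chain (X : topologicalType) n (c : chains X n) : Prop :=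
  forall s, s \in dom c -> continuous s.

Definition qop (X : topologicalType) (op : X -> X -> X) n
  (s t : Simplex n -> X) : Simplex n -> X := fun p => op (s p) (t p).

(* d_i sigma and s_i sigma for i = k+1. *)
Definition dface (X : topologicalType) n (k : 'I_n.+2) (s : Simplex n.+1 -> X)
  : Simplex n -> X := s \o affine (face_v k).
Definition sdeg (X : topologicalType) n (k : 'I_n.+2) (s : Simplex n.+1 -> X)
  : Simplex n -> X := s \o affine (degen_v k).

(* boundary of a generator sigma of C_(n+1):
   sum_(i=2)^(n+2) (-1)^i (d_i sigma - d_i sigma |> s_i sigma), with i = k+1. *)
Definition bd_gen (X : topologicalType) (op : X -> X -> X) n
  (s : Simplex n.+1 -> X) : chains X n :=
  \sum_(k : 'I_n.+2 | (0 < k)%N)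
     ((-1) ^+ k.+1 : int) *: (<< dface k s >> - << qop op (dface k s) (sdeg k s) >>).

Definition bd (X : topologicalType) (op : X -> X -> X) (n : nat)
  : chains X n -> chains X n.-1 :=
  match n return chains X n -> chains X n.-1 with
  | 0 => fun _ => 0
  | m.+1 => fun c => fglift (@bd_gen X op m) c
  end.
Arguments bd {X} op n _.

(* Main.v *)
Require Import Defs.
From HB Require Import structures.
From mathcomp Require Import all_boot all_order all_algebra.
From mathcomp Require Import all_classical all_reals all_analysis.
From mathcomp.multinomials Require Import freeg.
From mathcomp Require Import Rstruct Rstruct_topology zify ring.
Set Implicit Arguments. Unset Strict Implicit.
Import GRing.Theory.
Local Open Scope ring_scope.

Lemma affine_comp m n l (v : 'I_n.+1 -> 'I_l.+1) (w : 'I_m.+1 -> 'I_n.+1) (t : Simplex m) :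
  affine v (affine w t) = affine (v \o w) t.
Proof.
apply: val_inj => /=; apply/rowP => i; rewrite !mxE.
under eq_bigr do rewrite mxE.
apply/esym; rewrite (partition_big w (fun j => v j == i)) /=; last by move=> q /eqP ->.
apply: eq_bigr => j vj; apply: eq_bigl => q.
by case: (eqVneq (w q) j) => [->|]; rewrite ?andbF ?andbT ?vj.
Qed.

HB.instance Definition fglift_add (K : choiceType) (M : lmodType int) (g : K -> M) :=
  GRing.isAdditive.Build {freeg K / int} M (fglift g) (lift_is_additive g).

Lemma fgl_Z (K : choiceType) (M : lmodType int) (g : K -> M) (k : int) D :
  fglift g (k *: D) = k *: fglift g D.
Proof. by rewrite -[in LHS](intz k) scaler_int raddfMz -scaler_int intz. Qed.

Lemma fgl_sum (K : choiceType) (M : lmodType int) (g : K -> M) (I : Type) (r : seq I) (P : pred I) (F : I -> {freeg K / int}) :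
  fglift g (\sum_(i <- r | P i) F i) = \sum_(i <- r | P i) fglift g (F i).
Proof. exact: raddf_sum. Qed.

Lemma fgl_B (K : choiceType) (M : lmodType int) (g : K -> M) (a b : {freeg K / int}) :
  fglift g (a - b) = fglift g a - fglift g b.
Proof. exact: raddfB. Qed.

Lemma fgl_U (K : choiceType) (M : lmodType int) (g : K -> M) x :
  fglift g << x >> = g x.
Proof. by rewrite liftU scale1r. Qed.

Lemma invol_sum (K : choiceType) (I : finType) (P Q : pred I) (phi : I -> I)
  (H : I -> {freeg K / int}) :
  involutive phi -> (forall x, P (phi x) = P x) ->
  (forall x, P x -> ~~ Q x -> Q (phi x)) ->
  (forall x, P x -> Q x -> H (phi x) = - H x) ->
  \sum_(x | P x) H x = 0.
Proof.
move=> inv Pphi Qphi Hphi.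
have HN x : P x -> H (phi x) = - H x.
  move=> Px; case Qx: (Q x); first exact: Hphi.
  move/negbT: Qx => nQx.
  have Pp : P (phi x) by rewrite Pphi.
  have e := Hphi (phi x) Pp (Qphi x Px nQx).
  by rewrite inv in e; rewrite e opprK.
have S_eq : \sum_(x | P x) H x = - \sum_(x | P x) H x.
  rewrite {1}(reindex_inj (inv_inj inv)) /= -sumrN.
  by apply: eq_big => x; [rewrite Pphi | rewrite Pphi; exact: HN].
apply/eqP/freeg_eqP => z; rewrite coeff0.
have := congr1 (coeff z) S_eq; rewrite coeffN; lia.
Qed.

Definition phi p (x : 'I_p.+3 * 'I_p.+2) : 'I_p.+3 * 'I_p.+2 :=
  if (x.2 < x.1)%N then (inord x.2, inord x.1.-1) else (inord x.2.+1, inord x.1).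

Lemma phiK p : involutive (@phi p).
Proof.
move=> [k j]; have := ltn_ord k; have := ltn_ord j; rewrite /phi /= => hj hk.
case: (ltnP j k) => h /=.
  rewrite !inordK; try lia. rewrite ifN; last lia.
  congr pair; apply: val_inj; rewrite /= inordK; lia.
rewrite !inordK; try lia. rewrite ifT; last lia.
congr pair; apply: val_inj; rewrite /= inordK; lia.
Qed.

Lemma bumpE k i : bump k i = if (k <= i)%N then i.+1 else i.
Proof. by rewrite /bump; case: leqP; rewrite ?addn0 ?addn1. Qed.

Lemma val_face n (k : 'I_n.+2) i : nat_of_ord (face_v k i) = if (k <= i)%N then i.+1 else i.
Proof. by rewrite /= bumpE. Qed.

Lemma val_degen n (k : 'I_n.+2) i : nat_of_ord (degen_v k i) = if (i < k)%N then nat_of_ord k else i.+1.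
Proof. rewrite /degen_v; case: ltnP => h //; rewrite val_face; case: leqP => //; lia. Qed.

Ltac dif := repeat match goal with |- context[if ?b then _ else _] =>
  lazymatch b with context[if _ then _ else _] => fail | _ => let E := fresh "E" in case E: b end end.

Section V.
Variables (p : nat) (k : 'I_p.+3) (j : 'I_p.+2).
Hypotheses (h0 : (0 < j)%N) (hjk : (j < k)%N).
Let k' : 'I_p.+3 := inord j.
Let j' : 'I_p.+2 := inord k.-1.
Let e1 : nat_of_ord k' = j. Proof. rewrite /k' inordK //; have := ltn_ord j; lia. Qed.
Let e2 : nat_of_ord j' = k.-1. Proof. rewrite /j' inordK //; have := ltn_ord k; lia. Qed.

Ltac vt := apply: funext => i; apply: ord_inj; rewrite /comp;
  rewrite ?(val_face, val_degen, bumpE, e1, e2); dif; lia.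

Lemma vA : face_v k \o face_v j = face_v k' \o face_v j'. Proof. vt. Qed.
Lemma vB : face_v k \o degen_v j = degen_v k' \o face_v j'. Proof. vt. Qed.
Lemma vC : degen_v k \o face_v j = face_v k' \o degen_v j'. Proof. vt. Qed.
Lemma vCD : degen_v k \o face_v j = degen_v k \o degen_v j. Proof. vt. Qed.
Lemma vBD : face_v k' \o degen_v j' = degen_v k' \o degen_v j'. Proof. vt. Qed.
End V.

Lemma swap4 (V : zmodType) (a b c t : V) : a - c - (b - t) = a - b - (c - t).
Proof.
by rewrite !opprB !addrA (addrAC _ t (-b)) (addrAC _ t (-c)) (addrAC a (-c) (-b)).
Qed.

Lemma comp_aff (X : topologicalType) m n l (s : Simplex l -> X)
  (v : 'I_n.+1 -> 'I_l.+1) (w : 'I_m.+1 -> 'I_n.+1) :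
  (s \o affine v) \o affine w = s \o affine (v \o w).
Proof. by apply: funext => t /=; rewrite affine_comp. Qed.

Lemma core (X : topologicalType) (op : X -> X -> X)
  (idem : forall x, op x x = x)
  (distr : forall x y z, op (op x y) z = op (op x z) (op y z)) p
  (s : Simplex p.+2 -> X) :
  fglift (@bd_gen X op p) (@bd_gen X op p.+1 s) = 0.
Proof.
have dq n (j : 'I_n.+2) (a b : Simplex n.+1 -> X) :
  dface j (qop op a b) = qop op (dface j a) (dface j b) by [].
have sq n (j : 'I_n.+2) (a b : Simplex n.+1 -> X) :
  sdeg j (qop op a b) = qop op (sdeg j a) (sdeg j b) by [].
have qi n (a : Simplex n -> X) : qop op a a = a by apply: funext => t; rewrite /qop idem.
have qd n (a b c : Simplex n -> X) : qop op (qop op a b) c = qop op (qop op a c) (qop op b c).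
  by apply: funext => t; rewrite /qop distr.
set g := @bd_gen X op p.
rewrite /bd_gen fgl_sum.
under eq_bigr => k _ do rewrite fgl_Z fgl_B !fgl_U.
rewrite /g /bd_gen.
under eq_bigr => k _ do rewrite -sumrB scaler_sumr.
under eq_bigr => k _ do under eq_bigr => j _ do rewrite -scalerBr scalerA.
rewrite pair_big_dep /=.
under eq_bigr => x _ do rewrite !dq !sq /dface /sdeg !comp_aff.
refine (@invol_sum _ _ _ (fun x : 'I_p.+3 * 'I_p.+2 => (x.2 < x.1)%N) (@phi p) _ _ _ _ _).
- exact: phiK.
- move=> [k j]; have := ltn_ord k; have := ltn_ord j; rewrite /phi /= => hj hk.
  case: ifP => /= h; rewrite !inordK; try lia;
  apply/andP/andP => -[h1 h2]; split; lia.
- move=> [k j]; have := ltn_ord k; have := ltn_ord j; rewrite /phi /= => hj hk.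
  move=> /andP[h1 h2]; rewrite -leqNgt => h; case: ifP => /= h'; first lia.
  rewrite !inordK; lia.
move=> [k j] /= /andP[hk hj] hjk; rewrite /phi; case: ifP => /= h; last lia.
rewrite -(vBD hj hjk) -(vC hj hjk) -(vB hj hjk) -(vA hj hjk) -(vCD hj hjk).
rewrite qi -qd.
have := ltn_ord k; have := ltn_ord j => hj' hk'.
rewrite !inordK; try lia.
have -> : (k.-1).+1 = k by lia.
rewrite swap4.
rewrite -scaleNr; congr (_ *: _).
rewrite !exprS; ring.
Qed.

Theorem mainTheorem1 (X : topologicalType) (op : X -> X -> X)
  (hX : topological_quandle op) (n : nat) (c : chains X n) :
  is_singular_chain c -> bd op n.-1 (bd op n c) = 0.
Proof.
move=> _; case: hX => idem _ distr _ _.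
case: n c => [|[|p]] c //=.
rewrite -[c]freeg_sumE !fgl_sum.
rewrite big1 // => z _.
by rewrite liftU fgl_Z core // scaler0.
Qed.
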